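(* Let $\tilde{\mathcal D}$ be a finite set of examples, let $\mathrm{sim}:\tilde{\mathcal D}\times\tilde{\mathcal D}\to\mathbb{R}$, let $C:\tilde{\mathcal D}\to[0,\infty)$, let $\tau\ge 0$, and let $\sigma:[0,\infty)\to\mathbb{R}$ be non-decreasing and concave with $\sigma(0)=0$. For $\mathcal S\subseteq\tilde{\mathcal D}$ define $$OBJ(\mathcal S)=\sum_{x_i\in\tilde{\mathcal D}}\sigma\Big(\sum_{x_j\in\mathcal S}\mathbb 1_{[\mathrm{sim}(x_i,x_j)\ge\tau]}\,\mathrm{sim}(x_i,x_j)\,C(x_j)\Big).$$ Let $s\ge 1$, let $\mathcal S^*\in\arg\max_{\mathcal S\subseteq\tilde{\mathcal D},\,|\mathcal S|\le s}OBJ(\mathcal S)$, and let $\mathcal S$ be the greedy solution of size $s$, obtained by starting from $\emptyset$ and repeatedly adding an element $x\in\tilde{\mathcal D}\setminus\mathcal S$ maximizing $OBJ(\mathcal S\cup\{x\})-OBJ(\mathcal S)$ until $|\mathcal S|=s$. Then $$OBJ(\mathcal S)\ge(1-1/e)\cdot OBJ(\mathcal S^* ).$$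
   Context: In the paper, $\mathrm{sim}$ is the cosine similarity between embeddings of augmentations of two examples, $C$ is a prediction confidence (e.g. maximum softmax probability), $\tau$ is a neighborhood threshold and $\sigma$ is a utility function (e.g. the positive part of $\tanh$); $OBJ$ is the total reduced neighborhood confidence objective for data pruning. *)

(* Defs.v *)
From HB Require Import structures.
From mathcomp Require Import all_boot all_order all_algebra.
From mathcomp Require Import all_classical all_reals all_analysis.
Set Implicit Arguments. Unset Strict Implicit. Unset Printing Implicit Defensive.
Import Order.TTheory GRing.Theory Num.Theory.
Local Open Scope ring_scope.

Section Defs.
Variables (R : realType) (T : finType).

Definition OBJ (sim : T -> T -> R) (C : T -> R) (tau : R) (sigma : R -> R)
  (S : {set T}) : R :=
  \sum_(i : T) sigma (\sum_(j in S)
      (if tau <= sim i j then 1 else 0) * sim i j * C j).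

Definition nondecr_nonneg (sigma : R -> R) : Prop :=
  forall x y : R, 0 <= x -> x <= y -> sigma x <= sigma y.

Definition concave_nonneg (sigma : R -> R) : Prop :=
  forall x y t : R, 0 <= x -> 0 <= y -> 0 <= t -> t <= 1 ->
    t * sigma x + (1 - t) * sigma y <= sigma (t * x + (1 - t) * y).

Definition greedy_step (F : {set T} -> R) (S : {set T}) (x : T) : Prop :=
  x \notin S /\
  forall y, y \notin S -> F (y |: S) - F S <= F (x |: S) - F S.

Fixpoint greedy_from (F : {set T} -> R) (S : {set T}) (xs : seq T) : Prop :=
  match xs with
  | [::] => True
  | x :: xs' => greedy_step F S x /\ greedy_from F (x |: S) xs'
  end.

End Defs.

(* Main.v *)
Require Import Defs.
From HB Require Import structures.
From mathcomp Require Import all_boot all_order all_algebra.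
From mathcomp Require Import all_classical all_reals all_analysis.
From mathcomp Require Import ring lra.
Import Order.TTheory GRing.Theory Num.Theory.
Local Open Scope ring_scope.

Lemma setU1_mem' (T : finType) (y : T) (A : {set T}) : y \in A -> y |: A = A.
Proof. by move=> yA; apply/setP => z; rewrite !inE; case: eqP => // ->. Qed.

Arguments setU1_mem' {T y A}.
Section Gen.
Variables (R : realType) (T : finType) (F : {set T} -> R).
Hypothesis Fmono : forall A B : {set T}, A \subset B -> F A <= F B.
Hypothesis Fsub : forall (A B : {set T}) x, A \subset B -> x \notin B ->
  F (x |: B) - F B <= F (x |: A) - F A.

Lemma gain_sub (A B : {set T}) y : A \subset B ->
  F (y |: B) - F B <= F (y |: A) - F A.
Proof.
move=> AB; case: (boolP (y \in B)) => yB; last exact: Fsub.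
rewrite (setU1_mem' yB) subrr subr_ge0; apply: Fmono; exact: finset.subsetUr.
Qed.

Lemma chain (A : {set T}) (l : seq T) :
  F (A :|: [set y in l]) - F A <= \sum_(y <- l) (F (y |: A) - F A).
Proof.
elim: l => [|y l IH].
  rewrite big_nil.
  have -> : A :|: [set y in [::]] = A by apply/setP => z; rewrite !inE orbF.
  by rewrite subrr.
rewrite big_cons.
have -> : A :|: [set z in y :: l] = y |: (A :|: [set z in l]).
  by apply/setP => z; rewrite !inE orbCA.
have := @gain_sub _ _ y (finset.subsetUl A [set z in l]).
lra.
Qed.

Lemma step (Sstar S : {set T}) (s : nat) x :
  (#|Sstar| <= s)%N -> greedy_step F S x ->
  F Sstar <= F S + s%:R * (F (x |: S) - F S).
Proof.
move=> Hc [xS Hx].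
have d0 : 0 <= F (x |: S) - F S by rewrite subr_ge0; apply: Fmono; exact: finset.subsetUr.
have h1 : F Sstar <= F (S :|: [set y in enum Sstar]).
  by rewrite set_enum; apply: Fmono; exact: finset.subsetUr.
have h2 := chain S (enum Sstar).
have h3 : \sum_(y <- enum Sstar) (F (y |: S) - F S) <= s%:R * (F (x |: S) - F S).
  rewrite big_enum /=.
  apply: (@le_trans _ _ (\sum_(y in Sstar) (F (x |: S) - F S))).
    apply: ler_sum => y _.
    case: (boolP (y \in S)) => yS; last exact: Hx.
    by rewrite (setU1_mem' yS) subrr.
  rewrite sumr_const mulr_natl; exact: ler_wpMn2l.

lra.
Qed.

Lemma greedy_bound (Sstar : {set T}) (s : nat) (xs : seq T) (S : {set T}) :
  (1 <= s)%N -> (#|Sstar| <= s)%N -> greedy_from F S xs ->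
  F Sstar - F (S :|: [set y in xs]) <= (1 - 1 / s%:R) ^+ (size xs) * (F Sstar - F S).
Proof.
move=> s1 Hc; elim: xs S => [|x xs IH] S /=.
  move=> _; rewrite expr0 mul1r.
  have -> : S :|: [set y in [::]] = S by apply/setP => z; rewrite !inE orbF.
  by [].
move=> [Hx Hg].
have -> : S :|: [set y in x :: xs] = (x |: S) :|: [set y in xs].
  by apply/setP => z; rewrite !inE orbCA orbA.
have IH' := IH _ Hg.
have st := @step Sstar S s x Hc Hx.
have sp : 0 < s%:R :> R by rewrite ltr0n.
have r0 : 0 <= 1 - 1 / s%:R :> R.
  rewrite subr_ge0 ler_pdivrMr // mul1r ler1n //.
have rn0 : 0 <= (1 - 1 / s%:R) ^+ size xs :> R by apply: exprn_ge0.
have key : F Sstar - F (x |: S) <= (1 - 1 / s%:R) * (F Sstar - F S).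
  have -> : (1 - 1 / s%:R) * (F Sstar - F S) = (F Sstar - F S) - (F Sstar - F S) / s%:R by ring.
  have : (F Sstar - F S) / s%:R <= F (x |: S) - F S.
    rewrite ler_pdivrMr // mulrC; lra.
  lra.
apply: (le_trans IH'); rewrite exprSr -mulrA.
by apply: ler_wpM2l.
Qed.

End Gen.


Lemma sig_sub (R : realType) (sigma : R -> R) (Hconc : concave_nonneg sigma) (a b d : R) :
  0 <= a -> a <= b -> 0 <= d ->
  sigma (b + d) - sigma b <= sigma (a + d) - sigma a.
Proof.
move=> a0 ab d0.
have [L0|Lne] := eqVneq (b + d - a) 0.
  have e1 : b = a by lra.
  have e2 : d = 0 by lra.
  by rewrite e1 e2 addr0.
have Lp : 0 < b + d - a by rewrite lt0r Lne /=; lra.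
set t := (b - a) / (b + d - a).
have t0 : 0 <= t by rewrite /t divr_ge0 //; lra.
have t1 : t <= 1 by rewrite /t ler_pdivrMr // mul1r; lra.
have b0 : 0 <= b + d by lra.
have c1 := Hconc a (b + d) t a0 b0 t0 t1.
have e1 : t * a + (1 - t) * (b + d) = a + d.
  rewrite /t; field; exact: Lne.
have t0' : 0 <= 1 - t by lra.
have t1' : 1 - t <= 1 by lra.
have c2 := Hconc a (b + d) (1 - t) a0 b0 t0' t1'.
have e2 : (1 - t) * a + (1 - (1 - t)) * (b + d) = b.
  rewrite /t; field; exact: Lne.
rewrite e1 in c1; rewrite e2 in c2.
move: c1 c2; rewrite !mulrBl !mul1r; lra.
Qed.

Lemma expbound (R : realType) (s : nat) : (1 <= s)%N ->
  (1 - 1 / s%:R) ^+ s <= expR (-1) :> R.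
Proof.
move=> s1.
have sp : 0 < s%:R :> R by rewrite ltr0n.
have r0 : 0 <= 1 - 1 / s%:R :> R.
  by rewrite subr_ge0 ler_pdivrMr // mul1r ler1n.
have h : 1 - 1 / s%:R <= expR (- (1 / s%:R)) :> R.
  have := expR_ge1Dx (- (1 / s%:R) : R); lra.
apply: (le_trans (lerXn2r s _ _ h)).
- by rewrite nnegrE.
- by rewrite nnegrE expR_ge0.
rewrite -expRM_natl.
have -> : s%:R * - (1 / s%:R) = -1 :> R.
  by rewrite mulrN mul1r divff // gt_eqF.
by [].
Qed.

Theorem theorem4 (R : realType) (T : finType)
  (sim : T -> T -> R) (C : T -> R) (tau : R) (sigma : R -> R) (s : nat)
  (HC : forall x, 0 <= C x) (Htau : 0 <= tau)
  (Hmono : nondecr_nonneg sigma) (Hconc : concave_nonneg sigma)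
  (Hsig0 : sigma 0 = 0)
  (Hs : (1 <= s)%N) (HsT : (s <= #|T|)%N)
  (Sstar : {set T}) (HSstar_card : (#|Sstar| <= s)%N)
  (HSstar_opt : forall S' : {set T}, (#|S'| <= s)%N ->
      OBJ sim C tau sigma S' <= OBJ sim C tau sigma Sstar)
  (xs : seq T) (Hxs_size : size xs = s)
  (Hgreedy : greedy_from (OBJ sim C tau sigma) finset.set0 xs) :
  OBJ sim C tau sigma [set x in xs]%SET >=
    (1 - 1 / expR 1) * OBJ sim C tau sigma Sstar.
Proof.
set c := fun i j => (if tau <= sim i j then 1 else 0) * sim i j * C j.
have c0 : forall i j, 0 <= c i j.
  move=> i j; rewrite /c; case: ifP => h.
    by rewrite mul1r mulr_ge0 // (le_trans Htau h).
  by rewrite !mul0r.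
set F := OBJ sim C tau sigma.
have FE : forall A, F A = \sum_i sigma (\sum_(j in A) c i j) by [].
have w0 : forall i (A : {set T}), 0 <= \sum_(j in A) c i j.
  by move=> i A; apply: sumr_ge0 => j _.
have wmono : forall i (A B : {set T}), A \subset B ->
    \sum_(j in A) c i j <= \sum_(j in B) c i j.
  move=> i A B AB; rewrite (big_mkcond (fun j => j \in A)) (big_mkcond (fun j => j \in B)).
  apply: ler_sum => j _; case: ifP => jA.
    by rewrite (fintype.subsetP AB _ jA).
  by case: ifP.
have Fmono : forall A B : {set T}, A \subset B -> F A <= F B.
  move=> A B AB; rewrite !FE; apply: ler_sum => i _.
  by apply: Hmono; [apply: w0 | apply: wmono].
have Fsub : forall (A B : {set T}) x, A \subset B -> x \notin B ->
    F (x |: B) - F B <= F (x |: A) - F A.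
  move=> A B x AB xB.
  have xA : x \notin A by apply: contra xB; exact: (fintype.subsetP AB).
  rewrite !FE -!sumrB; apply: ler_sum => i _.
  rewrite (big_setU1 _ xB) (big_setU1 _ xA) /= ![c i x + _]addrC.
  apply: sig_sub => //. all: try apply: w0. all: try apply: wmono => //.
have F0 : F finset.set0 = 0.
  rewrite FE big1 // => i _; by rewrite big_set0 Hsig0.
have Fge0 : 0 <= F Sstar.
  rewrite FE; apply: sumr_ge0 => i _; rewrite -{1}Hsig0; apply: Hmono => //; exact: w0.
have gb := @greedy_bound R T F Fmono Fsub Sstar s xs finset.set0 Hs HSstar_card Hgreedy.
rewrite finset.set0U F0 subr0 Hxs_size in gb.
have eb := @expbound R s Hs.
have hm : (1 - 1 / s%:R) ^+ s * F Sstar <= expR (-1) * F Sstar.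
  exact: ler_wpM2r.
rewrite expRN div1r in hm; rewrite div1r mulrBl mul1r.
rewrite div1r in gb; lra.
Qed.
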